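(* Let $\mathscr{V}\subseteq\mathfrak{B}(\mathcal{H})$ be a linear subspace with ${\rm alg}(\mathscr{V})=\mathfrak{B}(\mathcal{H})$, and let $\rho$ be a positive definite operator. Then $\rho\sim{\rm alg}(\mathcal{D}_\rho^{-1}(\mathscr{V}))$ if and only if ${\rm alg}(\mathcal{D}_\rho^{-1}(\mathscr{V}))=\mathfrak{B}(\mathcal{H})$.
   Context: $\mathcal{H}$ finite-dimensional complex Hilbert space, $\mathfrak{B}(\mathcal{H})$ its linear operators. A $*$-algebra is a linear subspace of $\mathfrak{B}(\mathcal{H})$ closed under products and adjoints; ${\rm alg}(\mathcal{S})$ is the smallest $*$-algebra containing $\mathcal{S}$. $\mathcal{D}_\rho^{-1}(X)=\rho^{-1/2}X\rho^{-1/2}$. A $*$-algebra $\mathscr{A}$ has a Wedderburn decomposition: unitary $U$ and orthogonal decomposition $\mathcal{H}\cong\bigoplus_l\mathcal{H}_{S,l}\otimes\mathcal{H}_{F,l}\oplus\mathcal{H}_R$ with $\mathscr{A}=U(\bigoplus_l\mathfrak{B}(\mathcal{H}_{S,l})\otimes I_{F,l}\oplus 0_R)U^\dagger$. Compatibility: $\rho\sim\mathscr{A}$ if for some such decomposition $\rho=U(\bigoplus_l\rho_{S,l}\otimes\tau_{F,l}\oplus 0_R)U^\dagger$ with $\rho_{S,l}\in\mathfrak{B}(\mathcal{H}_{S,l})$, $\tau_{F,l}\in\mathfrak{B}(\mathcal{H}_{F,l})$. *)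

(* Defs.v *)
(* Operators on the n-dimensional complex Hilbert space C^n
   are n x n matrices over C := R[i] (the complex numbers over a real type R). *)
From HB Require Import structures.
From mathcomp Require Import all_boot all_order all_algebra.
From mathcomp Require Import reals.
From mathcomp.real_closed Require Import complex mxtens.
Set Implicit Arguments. Unset Strict Implicit. Unset Printing Implicit Defensive.
Import Order.TTheory GRing.Theory Num.Theory.
Local Open Scope ring_scope.

Section Defs.
Variable C : numClosedFieldType.
Variable n : nat.
Local Notation M := 'M[C]_n.

Definition adjmx (A : M) : M := map_mx Num.conj A^T.

Definition unitarymx (U : M) : Prop := U *m adjmx U = 1%:M /\ adjmx U *m U = 1%:M.

Definition posdef (A : M) : Prop :=
  adjmx A = A /\
  forall v : 'cV[C]_n, v != 0 -> 0 < ((map_mx Num.conj v^T) *m A *m v) 0 0.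

Definition mxset := M -> Prop.

Definition is_subspace (V : mxset) : Prop :=
  V 0 /\ (forall A B, V A -> V B -> V (A + B)) /\ (forall (c : C) A, V A -> V (c *: A)).

Definition is_star_alg (S : mxset) : Prop :=
  is_subspace S /\ (forall A B, S A -> S B -> S (A *m B)) /\ (forall A, S A -> S (adjmx A)).

Definition alg (S : mxset) : mxset :=
  fun A => forall T : mxset, is_star_alg T -> (forall B, S B -> T B) -> T A.

Definition is_full (S : mxset) : Prop := forall A : M, S A.

(* D_rho^{-1}(V) = rho^{-1/2} V rho^{-1/2}, with sq = rho^{-1/2} *)
Definition Dinv (sq : M) (V : mxset) : mxset :=
  fun A => exists2 X, V X & A = sq *m X *m sq.

(* Block operator  U ( (+)_l  B_l (x) T_l  (+)  0_R ) U^dagger  where the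
   orthogonal decomposition H = (+)_l H_{S,l} (x) H_{F,l} (+) H_R has
   dim H_{S,l} = s l, dim H_{F,l} = f l, dim H_R = r, and E records
   \sum_l s_l f_l + r = n. *)
Definition wblock (k : nat) (s f : 'I_k -> nat) (r : nat)
  (E : (\sum_(l < k) s l * f l + r = n)%N) (U : M)
  (B : forall l, 'M[C]_(s l)) (T : forall l, 'M[C]_(f l)) : M :=
  U *m castmx (E, E)
     (block_mx (mxdiag (fun l => B l *t T l)) 0 0 (0 : 'M[C]_r)) *m adjmx U.

(* Wedderburn decomposition data (k,s,f,r,E,U) for the *-algebra A:
   A = U ( (+)_l B(H_{S,l}) (x) I_{F,l} (+) 0_R ) U^dagger *)
Definition wedderburn_for (A : mxset) (k : nat) (s f : 'I_k -> nat) (r : nat)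
  (E : (\sum_(l < k) s l * f l + r = n)%N) (U : M) : Prop :=
  unitarymx U /\
  forall X : M, A X <-> exists B : forall l, 'M[C]_(s l),
      X = wblock E U B (fun l => 1%:M).

Definition compatible (rho : M) (A : mxset) : Prop :=
  exists (k : nat) (s f : 'I_k -> nat) (r : nat)
         (E : (\sum_(l < k) s l * f l + r = n)%N) (U : M),
    wedderburn_for A E U /\
    exists (rS : forall l, 'M[C]_(s l)) (tF : forall l, 'M[C]_(f l)),
      rho = wblock E U rS tF.

End Defs.

(* Main.v *)
Require Import Defs.
From HB Require Import structures.
From mathcomp Require Import all_boot all_order all_algebra.
From mathcomp Require Import reals.
From mathcomp.real_closed Require Import complex mxtens.
Set Implicit Arguments. Unset Strict Implicit. Unset Printing Implicit Defensive.
Import Order.TTheory GRing.Theory Num.Theory.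
Local Open Scope ring_scope.


Section Basic.
Variable C : numClosedFieldType.
Variable n : nat.
Local Notation M := 'M[C]_n.

Lemma adjmxK (A : M) : adjmx (adjmx A) = A.
Proof.
apply/matrixP => i j; rewrite !mxE conjCK //.
Qed.

Lemma adjmxM (A B : M) : adjmx (A *m B) = adjmx B *m adjmx A.
Proof. by rewrite /adjmx trmx_mul map_mxM. Qed.

Lemma adjmx1 : adjmx (1%:M : M) = 1%:M.
Proof. by rewrite /adjmx trmx1 map_mx1. Qed.

Lemma adjmxD (A B : M) : adjmx (A + B) = adjmx A + adjmx B.
Proof. by apply/matrixP => i j; rewrite !mxE rmorphD. Qed.

Lemma adjmxZ (c : C) (A : M) : adjmx (c *: A) = c^* *: adjmx A.
Proof. by apply/matrixP => i j; rewrite !mxE rmorphM. Qed.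

Lemma adjmx0 : adjmx (0 : M) = 0.
Proof. by apply/matrixP => i j; rewrite !mxE rmorph0. Qed.

Lemma alg_gen (S : mxset C n) A : S A -> alg S A.
Proof. by move=> SA T _ H; apply: H. Qed.

Lemma alg_star (S : mxset C n) : is_star_alg (alg S).
Proof.
split; [split; [|split]|split].
- by move=> T [[T0 _] _] _.
- by move=> A B HA HB T HT HS; have [[_ [TD _]] _] := HT; apply: TD; [apply: HA|apply: HB].
- by move=> c A HA T HT HS; have [[_ [_ TZ]] _] := HT; apply: TZ; apply: HA.
- by move=> A B HA HB T HT HS; have [_ [TM _]] := HT; apply: TM; [apply: HA|apply: HB].
- by move=> A HA T HT HS; have [_ [_ TA]] := HT; apply: TA; apply: HA.
Qed.

Definition qf (P : M) (w : 'cV[C]_n) : C := (map_mx Num.conj w^T *m P *m w) 0 0.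

Lemma entry_row_col m (A : 'M[C]_(m, n)) (P : M) (B : 'M[C]_(n, m)) i :
  (A *m P *m B) i i = (row i A *m P *m col i B) 0 0.
Proof.
rewrite !mxE; apply: eq_bigr => j _; rewrite !mxE; congr (_ * _).
by apply: eq_bigr => k _; rewrite !mxE.
Qed.

End Basic.



Section Pos.
Variable C : numClosedFieldType.
Variable n : nat.
Local Notation M := 'M[C]_n.

Lemma qf_ge0 (P : M) w : posdef P -> 0 <= qf P w.
Proof.
move=> [_ HP]; have [->|nz] := eqVneq w 0.
  by rewrite /qf mulmx0 mxE.
exact: ltW (HP _ nz).
Qed.

Lemma tr_adj (P X : M) : \tr (adjmx X *m P *m X) = \sum_i qf P (col i X).
Proof.
apply: eq_bigr => i _; rewrite entry_row_col /qf; congr ((_ *m _ *m _) 0 0).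
by apply/matrixP => a b; rewrite !mxE.
Qed.

Lemma tr_adj_ge0 (P X : M) : posdef P -> 0 <= \tr (adjmx X *m P *m X).
Proof. by move=> HP; rewrite tr_adj; apply: sumr_ge0 => i _; apply: qf_ge0. Qed.

Lemma tr_adj_eq0 (P X : M) : posdef P -> \tr (adjmx X *m P *m X) = 0 -> X = 0.
Proof.
move=> HP; rewrite tr_adj => /eqP; rewrite psumr_eq0; last by move=> i _; apply: qf_ge0.
move=> /allP H; apply/matrixP => a b.
have: qf P (col b X) == 0 by have := H b (mem_index_enum _); rewrite implyTb.
have [z|nz] := eqVneq (col b X) 0.
  by move=> _; have := congr1 (fun v : 'cV[C]_n => v a 0) z; rewrite !mxE.
by have := (HP.2 _ nz); rewrite lt0r => /andP[/negPf ->].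
Qed.

Lemma sylvester (P D : M) : posdef P -> P *m D + D *m P = 0 -> D = 0.
Proof.
move=> HP H.
have HPD : P *m D = - (D *m P) by apply/eqP; rewrite -subr_eq0 opprK H.
have e1 : \tr (adjmx D *m P *m D) = - \tr (adjmx (adjmx D) *m P *m adjmx D).
  rewrite adjmxK -mulmxA HPD mulmxN mulmxA linearN /= mxtrace_mulC.
  congr (- _); rewrite [LHS]mxtrace_mulC -mulmxA [LHS]mxtrace_mulC.
  by rewrite (mxtrace_mulC P) -mulmxA (mxtrace_mulC (adjmx D)) -mulmxA.
have h1 := tr_adj_ge0 D HP; have h2 := tr_adj_ge0 (adjmx D) HP.
apply: (tr_adj_eq0 HP); apply/eqP.
have : \tr (adjmx D *m P *m D) + \tr (adjmx (adjmx D) *m P *m adjmx D) == 0.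
  by rewrite e1 addNr.
by rewrite paddr_eq0 // => /andP[].
Qed.

Lemma comm_sqrt (P Z : M) : posdef P -> Z *m (P *m P) = (P *m P) *m Z ->
  Z *m P = P *m Z.
Proof.
move=> HP H; apply/eqP; rewrite -subr_eq0; apply/eqP; apply: (sylvester HP).
rewrite mulmxBr mulmxBl !mulmxA -H -!mulmxA.
rewrite [P *m (Z *m P)]mulmxA.
by rewrite addrC addrA subrK subrr.
Qed.

Lemma posdef_unit (P : M) : posdef P -> P \in unitmx.
Proof.
move=> HP; rewrite -row_free_unit -kermx_eq0; apply/negPn/negP => nz.
have [i Hi] : exists i, row i (kermx P) != 0.
  apply/existsP; move: nz; apply: contraR; rewrite negb_exists => /forallP H.
  by apply/eqP/row_matrixP => i; rewrite row0; apply/eqP/negPn/H.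
set v := row i (kermx P) in Hi.
have vP : v *m P = 0 by rewrite /v -row_mul mulmx_ker row0.
set w : 'cV[C]_n := map_mx Num.conj v^T.
have wnz : w != 0.
  move: Hi; apply: contra => /eqP wz; apply/eqP/matrixP => a b.
  by have := congr1 (fun u : 'cV[C]_n => (u b a)^*) wz; rewrite !mxE conjCK rmorph0.
have := HP.2 _ wnz.
have -> : map_mx Num.conj w^T = v by apply/matrixP => a b; rewrite !mxE conjCK.
by rewrite vP mul0mx mxE ltxx.
Qed.

Lemma posdef_neq0 (P : M) : posdef P -> (0 < n)%N -> P != 0.
Proof.
move=> HP n0; apply/eqP => P0.
have wnz : (const_mx 1 : 'cV[C]_n) != 0.
  apply/eqP => /matrixP/(_ (Ordinal n0) 0); rewrite !mxE => /eqP; rewrite oner_eq0.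
  by [].
by have := HP.2 _ wnz; rewrite P0 mulmx0 mul0mx mxE ltxx.
Qed.

Lemma scalar_of_comm (Z : M) : (forall X : M, Z *m X = X *m Z) -> exists c, Z = c%:M.
Proof.
case: n Z => [|m] Z H; first by exists 0; apply/matrixP => [[]].
exists (Z 0 0); apply/matrixP => a b; rewrite !mxE -mulr_natr.
have key : forall x y p q, Z p x * (y == q)%:R = (p == x)%:R * Z y q.
  move=> x y p q; have := congr1 (fun X : 'M[C]_m.+1 => X p q) (H (delta_mx x y)).
  rewrite !mxE (bigD1 x) //= big1 ?addr0; last first.
    by move=> j /negPf nj; rewrite !mxE nj mulr0.
  rewrite (bigD1 y) //= big1 ?addr0; last first.
    by move=> j /negPf nj; rewrite !mxE nj andbF mul0r.
  by rewrite !mxE !eqxx /= ?andbT eq_sym.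
have [<-|nab] := eqVneq a b.
  by have := key 0 a 0 a; rewrite !eqxx !mulr_natr !mulr_natl !mulr1n => ->.
by have := key b b a b; rewrite eqxx (negPf nab) !mulr_natr !mulr_natl mulr1n !mulr0n => ->.
Qed.
End Pos.



Section Tens.
Variable C : numClosedFieldType.

Lemma mxtens_index_eq m p (i k : 'I_m) (j l : 'I_p) :
  (mxtens_index (i, j) == mxtens_index (k, l)) = (i == k) && (j == l).
Proof. by rewrite (can_eq (@mxtens_indexK m p)) xpair_eqE. Qed.

Lemma tens_scalar2 m p (a b : C) :
  (a%:M : 'M_m) *t (b%:M : 'M_p) = (a * b)%:M.
Proof.
apply/matrixP => u v.
case: (mxtens_indexP u) => i j; case: (mxtens_indexP v) => k l.
rewrite tensmxE !mxE mxtens_index_eq.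
by case: (i == k); case: (j == l); rewrite /= ?mulr1n ?mulr0n ?mulr0 ?mul0r.
Qed.

Lemma tens1_inj m p (X Y : 'M[C]_p) : (0 < m)%N ->
  (1%:M : 'M[C]_m) *t X = 1%:M *t Y -> X = Y.
Proof.
move=> m0 H; apply/matrixP => a b.
have := congr1 (fun Z : 'M[C]_(m * p) => Z (mxtens_index (Ordinal m0, a)) (mxtens_index (Ordinal m0, b))) H.
by rewrite /= !tensmxE !mxE eqxx !mul1r.
Qed.

Lemma size0_mx m p (A : 'M[C]_(m, p)) : (m = 0 \/ p = 0)%N -> A = 0.
Proof.
move=> H; apply/matrixP => [[i Hi] [j Hj]].
by exfalso; case: H => H; rewrite H in Hi Hj.
Qed.

Lemma mul_mxdiag k (p_ : 'I_k -> nat) (B B' : forall l, 'M[C]_(p_ l)) :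
  mxdiag B *m mxdiag B' = mxdiag (fun l => B l *m B' l).
Proof.
rewrite {2}/mxdiag mul_mxdiag_mxblock /mxdiag; apply: eq_mxblock => i j.
case: eqVneq => [<-|_]; last by rewrite mulmx0.
by rewrite !conform_mx_id.
Qed.

Lemma castmxM m m' (e : m = m') (A B : 'M[C]_m) :
  castmx (e, e) A *m castmx (e, e) B = castmx (e, e) (A *m B).
Proof. by case: m' / e. Qed.

Lemma castmx_scalar m m' (e : m = m') (a : C) :
  castmx (e, e) (a%:M : 'M[C]_m) = a%:M.
Proof. by case: m' / e. Qed.

Lemma castmx_zero m m' (e : m = m') :
  castmx (e, e) (0 : 'M[C]_m) = 0.
Proof. by case: m' / e. Qed.

End Tens.

Section GB.
Variable C : numClosedFieldType.
Variables (n k : nat) (s f : 'I_k -> nat) (r : nat).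
Variable (E : (\sum_(l < k) s l * f l + r = n)%N).
Variable U : 'M[C]_n.
Hypothesis HU : Defs.unitarymx U.

Definition Phi (B : forall l, 'M[C]_(s l)) (T : forall l, 'M[C]_(f l)) (d : 'M[C]_r) :=
  block_mx (mxdiag (fun l => B l *t T l)) 0 0 d.

Definition gb B T d : 'M[C]_n := U *m castmx (E, E) (Phi B T d) *m adjmx U.

Lemma wblock_gb B T : wblock E U B T = gb B T 0.
Proof. by []. Qed.

Lemma gbM B T d B' T' d' :
  gb B T d *m gb B' T' d' =
  gb (fun l => B l *m B' l) (fun l => T l *m T' l) (d *m d').
Proof.
rewrite /gb !mulmxA -[U *m _ *m adjmx U *m U]mulmxA HU.2 mulmx1.
rewrite -[U *m _ *m castmx _ _]mulmxA castmxM; congr (_ *m castmx _ _ *m _).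
rewrite /Phi mulmx_block !mulmx0 !mul0mx !addr0 !add0r mul_mxdiag.
by congr block_mx; apply: eq_mxdiag => l; rewrite tensmx_mul.
Qed.

Lemma eq_gb B T d B' T' d' :
  (forall l, B l *t T l = B' l *t T' l) -> d = d' -> gb B T d = gb B' T' d'.
Proof.
by move=> H ->; rewrite /gb /Phi (eq_mxdiag H).
Qed.

Lemma gb_inj B T d B' T' d' : gb B T d = gb B' T' d' ->
  (forall l, B l *t T l = B' l *t T' l) /\ d = d'.
Proof.
move=> H.
have e X : adjmx U *m (U *m X *m adjmx U) *m U = X.
  by rewrite !mulmxA HU.2 mul1mx -mulmxA HU.2 mulmx1.
have H1 := congr1 (fun X => adjmx U *m X *m U) H.
move: H1; rewrite /gb /= !e => /(congr1 (castmx (esym E, esym E))); rewrite !castmxK.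
rewrite /Phi => /eq_block_mx [/eq_mxdiagP H2 _ _ ->]; split=> //.
Qed.

Lemma gb_scalar (mu : C) :
  mu%:M = gb (fun l => 1%:M) (fun l => mu%:M) mu%:M.
Proof.
rewrite /gb /Phi.
have -> : mxdiag (fun l => (1%:M : 'M_(s l)) *t (mu%:M : 'M_(f l))) = mu%:M.
  rewrite -mxdiagZ; apply: eq_mxdiag => l; by rewrite tens_scalar2 mul1r.
rewrite -scalar_mx_block castmx_scalar mul_mx_scalar -scalemxAl HU.1.
by rewrite scalemx1.
Qed.

Lemma gb_zero B T : (forall l, B l *t T l = 0) -> gb B T 0 = 0.
Proof.
move=> H; rewrite /gb /Phi.
have -> : mxdiag (fun l => B l *t T l) = 0.
  by rewrite -(@mxdiag0 _ _ (fun l => (s l * f l)%N)); apply: eq_mxdiag.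
by rewrite block_mx0 castmx_zero mulmx0 mul0mx.
Qed.

End GB.



Section Surj.
Variable C : numClosedFieldType.

Lemma block_tens1 s f (A : 'M[C]_(s * f)) : (s * f = 0 \/ f = 1)%N ->
  A = (\matrix_(a, b) \sum_(x < f) A (mxtens_index (a, x)) (mxtens_index (b, x))) *t 1%:M.
Proof.
case=> [H|H].
  by rewrite [LHS](size0_mx _ (or_introl H)) [RHS](size0_mx _ (or_introl H)).
apply/matrixP => u v.
case: (mxtens_indexP u) => a x; case: (mxtens_indexP v) => b y.
have hx : (val x < 1)%N by rewrite -[X in (_ < X)%N]H ltn_ord.
have hy : (val y < 1)%N by rewrite -[X in (_ < X)%N]H ltn_ord.
have xy : y = x by apply: val_inj; move: hx hy; rewrite !ltnS !leqn0 => /eqP -> /eqP ->.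
rewrite xy tensmxE !mxE eqxx mulr1 (big_pred1 x) //.
move=> z; have hz : (val z < 1)%N by rewrite -[X in (_ < X)%N]H ltn_ord.
by apply/esym/eqP/val_inj; move: hx hz; rewrite !ltnS !leqn0 => /eqP -> /eqP ->.
Qed.

Lemma gb_surj n k (s f : 'I_k -> nat) (E : (\sum_(l < k) s l * f l + 0 = n)%N)
  (U : 'M[C]_n) : Defs.unitarymx U ->
  (forall l, s l * f l = 0 \/ f l = 1)%N ->
  (forall l1 l2, l1 != l2 -> s l1 * f l1 = 0 \/ s l2 * f l2 = 0)%N ->
  forall M : 'M[C]_n, exists B, M = wblock E U B (fun l => 1%:M).
Proof.
move=> HU H1 H2 M.
set N := castmx (esym E, esym E) (adjmx U *m M *m U).
have HM : M = U *m castmx (E, E) N *m adjmx U.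
  rewrite /N castmxKV !mulmxA HU.1 mul1mx -mulmxA HU.1 mulmx1 //.
set Q := ulsubmx N.
exists (fun l => \matrix_(a, b) \sum_(x < f l)
   submxblock Q l l (mxtens_index (a, x)) (mxtens_index (b, x))).
rewrite HM /wblock; congr (_ *m castmx _ _ *m _).
rewrite -[N]submxK (size0_mx (ursubmx N) (or_intror erefl)).
rewrite (size0_mx (dlsubmx N) (or_introl erefl)) (size0_mx (drsubmx N) (or_introl erefl)).
congr block_mx; rewrite -/Q -[Q]submxblockK /mxdiag; apply: eq_mxblock => i j.
case: eqVneq => [<-|nij]; last by apply: size0_mx; apply: H2.
by rewrite conform_mx_id submxblockK; apply: block_tens1.
Qed.

End Surj.



Section Main.
Variable C : numClosedFieldType.

Lemma scal_inj m (a b : C) : (0 < m)%N -> (a%:M : 'M[C]_m) = b%:M -> a = b.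
Proof.
move=> m0 /matrixP /(_ (Ordinal m0) (Ordinal m0)); rewrite !mxE eqxx.
by rewrite !mulr1n.
Qed.

Lemma comm_inv n (Z A : 'M[C]_n) : A \in unitmx -> comm_mx Z A -> comm_mx Z (invmx A).
Proof.
move=> uA H; rewrite /comm_mx.
rewrite -{1}[Z *m invmx A](mulKmx uA) [A *m (Z *m _)]mulmxA -H.
by rewrite -[Z *m A *m _]mulmxA mulmxV // mulmx1.
Qed.

Lemma full_compatible n (S : mxset C n) (rho : 'M[C]_n) :
  is_full S -> compatible rho S.
Proof.
move=> HS.
have E : (\sum_(l < 1) n * 1 + 0 = n)%N by rewrite big_ord1 muln1 addn0.
have HU : Defs.unitarymx (1%:M : 'M[C]_n) by rewrite /Defs.unitarymx adjmx1 mul1mx.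
have H1 : forall l : 'I_1, ((fun _ => n) l * (fun _ => 1%N) l = 0 \/ (fun _ => 1%N) l = 1)%N.
  by move=> l; right.
have H2 : forall l1 l2 : 'I_1, l1 != l2 ->
  ((fun _ => n) l1 * (fun _ => 1%N) l1 = 0 \/ (fun _ => n) l2 * (fun _ => 1%N) l2 = 0)%N.
  by move=> l1 l2; rewrite [l1]ord1 [l2]ord1 eqxx.
have surj := gb_surj E HU H1 H2.
exists 1%N, (fun _ => n), (fun _ => 1%N), 0%N, E, 1%:M; split.
  by split=> // X; split=> // _; apply: HS.
have [B HB] := surj rho; by exists B, (fun _ => 1%:M).
Qed.

Lemma compatible_full n (V : mxset C n) (rho sq : 'M[C]_n) :
  is_full (alg V) -> posdef rho -> posdef sq -> sq *m sq = invmx rho ->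
  compatible rho (alg (Dinv sq V)) -> is_full (alg (Dinv sq V)).
Proof.
move=> HV Hrho Hsq Hsq2 [k [s [f [r [E [U [[HU HA] [rS [tF Hr]]]]]]]]].
set A := alg (Dinv sq V) in HA *.
have urho := posdef_unit Hrho.
have usq : sq \in unitmx.
  have : (sq *m sq) \in unitmx by rewrite Hsq2 unitmx_inv.
  by rewrite unitmx_mul => /andP[].
pose Kp (Z : 'M[C]_n) := (forall X, A X -> comm_mx Z X) /\ comm_mx Z rho.
pose G (X : 'M[C]_n) := forall Z, Kp Z -> comm_mx Z X /\ comm_mx Z (adjmx X).
have Gstar : is_star_alg G.
  split; [split; [|split]|split].
  - by move=> Z _; rewrite adjmx0; split; apply: comm_mx0.
  - move=> X Y HX HY Z HZ; have [h1 h2] := HX Z HZ; have [h3 h4] := HY Z HZ.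
    by rewrite adjmxD; split; apply: comm_mxD.
  - move=> c X HX Z HZ; have [h1 h2] := HX Z HZ; rewrite adjmxZ /comm_mx.
    by rewrite -!scalemxAr -!scalemxAl h1 h2.
  - move=> X Y HX HY Z HZ; have [h1 h2] := HX Z HZ; have [h3 h4] := HY Z HZ.
    by rewrite adjmxM; split; apply: comm_mxM.
  - move=> X HX Z HZ; have [h1 h2] := HX Z HZ; by rewrite adjmxK.
have HVG : forall X, V X -> G X.
  move=> X VX Z [HZA HZr].
  have cZsq : comm_mx Z sq.
    apply: comm_sqrt => //; rewrite Hsq2; exact: comm_inv.
  have cZisq := comm_inv usq cZsq.
  have [_ [_ Aadj]] := alg_star (Dinv sq V).
  have AY : A (sq *m X *m sq) by apply: alg_gen; exists X.
  have AY' := Aadj _ AY.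
  have eY : adjmx (sq *m X *m sq) = sq *m adjmx X *m sq.
    by rewrite !adjmxM Hsq.1 mulmxA.
  have eX W : W = invmx sq *m (sq *m W *m sq) *m invmx sq.
    by rewrite mulmxA (mulKmx usq) (mulmxK usq).
  split.
    by rewrite (eX X); apply: comm_mxM; [apply: comm_mxM|] => //; apply: HZA.
  rewrite (eX (adjmx X)) -eY; apply: comm_mxM; [apply: comm_mxM|] => //; exact: HZA.
have HG : forall X, G X by move=> X; apply: (HV X G Gstar HVG).
have HK : forall Z, Kp Z -> exists mu, Z = mu%:M.
  move=> Z HZ; apply: scalar_of_comm => X; exact: ((HG X Z HZ).1).
have HKs : forall (c : forall l, 'M[C]_(f l)) (d : 'M[C]_r),
    (forall l, c l *m tF l = tF l *m c l) ->
    exists mu, gb E U (fun l => 1%:M) c d = mu%:M.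
  move=> c d Hc; apply: HK; split.
    move=> X /HA [B ->]; rewrite /comm_mx !wblock_gb !gbM //.
    by apply: eq_gb => [l|]; rewrite ?mul1mx ?mulmx1 ?mulmx0 ?mul0mx.
  by rewrite /comm_mx Hr !wblock_gb !gbM //; apply: eq_gb => [l|];
    rewrite ?mul1mx ?mulmx1 ?mulmx0 ?mul0mx ?Hc.
have Hr0 : r = 0%N.
  case: r E HA Hr HKs => // r' E HA Hr HKs; exfalso.
  have [mu Hmu] := HKs (fun l => 0) 1%:M (fun l => etrans (mul0mx _ _) (esym (mulmx0 _ _))).
  move: Hmu; rewrite (gb_scalar E HU mu) => /(gb_inj HU) [Hl Hd].
  have mu1 : mu = 1 by apply/esym/(scal_inj (m := r'.+1)).
  have Hsf : forall l, (s l * f l = 0)%N.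
    move=> l; case: (posnP (s l)) => [->//|sl0]; case: (posnP (f l)) => [->|fl0]; first by rewrite muln0.
    exfalso; have := tens1_inj sl0 (Hl l); rewrite mu1 => /matrixP/(_ (Ordinal fl0) (Ordinal fl0)).
    by rewrite !mxE eqxx /= => /eqP; rewrite eq_sym oner_eq0.
  have rho0 : rho = 0.
    by rewrite Hr wblock_gb; apply: gb_zero => l; apply: size0_mx; left; apply: Hsf.
  have n0 : (0 < n)%N by rewrite -E addnS.
  by move: (posdef_neq0 Hrho n0); rewrite rho0 eqxx.
subst r.
have Hb : forall l, (s l * f l = 0 \/ f l = 1)%N.
  move=> l; case: (posnP (s l)) => [->|sl0]; first by left.
  case: (posnP (f l)) => [->|fl0]; first by left; rewrite muln0.
  case: (ltngtP (f l) 1) => [|fl2|->]; last by right.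
    by rewrite ltnS leqn0 => /eqP fl; rewrite fl in fl0.
  exfalso.
  pose c := fun l' => if l' == l then tF l' else 0.
  have [mu Hmu] : exists mu, gb E U (fun l => 1%:M) c 0 = mu%:M.
    apply: HKs => l'; rewrite /c; case: (l' == l) => //.
    by rewrite mul0mx mulmx0.
  move: Hmu; rewrite (gb_scalar E HU mu) => /(gb_inj HU) [Hl _].
  have tFl : tF l = mu%:M.
    by have := tens1_inj sl0 (Hl l); rewrite /c eqxx.
  pose Dm (m : nat) : 'M[C]_m := \matrix_(i, j) ((i == 0%N :> nat) && (j == 0%N :> nat))%:R.
  pose c' := fun l' => if l' == l then Dm (f l') else 0.
  have [nu Hnu] : exists nu, gb E U (fun l => 1%:M) c' 0 = nu%:M.
    apply: HKs => l'; rewrite /c'; case: eqVneq => [->|_].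
      by rewrite tFl scalar_mxC.
    by rewrite mul0mx mulmx0.
  move: Hnu; rewrite (gb_scalar E HU nu) => /(gb_inj HU) [Hl' _].
  have := tens1_inj sl0 (Hl' l); rewrite /c' eqxx /Dm => /matrixP H.
  have := H (Ordinal fl0) (Ordinal fl0); have := H (Ordinal fl2) (Ordinal fl2).
  rewrite !mxE /= !mulr1n => <- /eqP; by rewrite oner_eq0.
have Hc : forall l1 l2, l1 != l2 -> (s l1 * f l1 = 0 \/ s l2 * f l2 = 0)%N.
  move=> l1 l2 n12.
  case: (posnP (s l1 * f l1)) => [->|p1]; first by left.
  case: (posnP (s l2 * f l2)) => [->|p2]; first by right.
  exfalso.
  have s1 : (0 < s l1)%N by move: p1; rewrite muln_gt0 => /andP[].
  have f1 : (0 < f l1)%N by move: p1; rewrite muln_gt0 => /andP[].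
  have s2 : (0 < s l2)%N by move: p2; rewrite muln_gt0 => /andP[].
  have f2 : (0 < f l2)%N by move: p2; rewrite muln_gt0 => /andP[].
  pose c := fun l' => if l' == l1 then (1%:M : 'M[C]_(f l')) else 0.
  have [mu Hmu] : exists mu, gb E U (fun l => 1%:M) c 0 = mu%:M.
    apply: HKs => l'; rewrite /c; case: (l' == l1).
      by rewrite mul1mx mulmx1.
    by rewrite mul0mx mulmx0.
  move: Hmu; rewrite (gb_scalar E HU mu) => /(gb_inj HU) [Hl _].
  have := tens1_inj s1 (Hl l1); rewrite /c eqxx => /(scal_inj f1) mu1.
  have := tens1_inj s2 (Hl l2); rewrite /c eq_sym (negPf n12) -mu1.
  move=> /matrixP/(_ (Ordinal f2) (Ordinal f2)); rewrite !mxE eqxx /= mulr1n.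
  by move=> /eqP; rewrite eq_sym oner_eq0.
move=> M; have [B ->] := gb_surj E HU Hb Hc M.
by apply/HA; exists B.
Qed.

End Main.


Unset Implicit Arguments.

Theorem mainTheorem5 (R : realType) (n : nat) (V : mxset R[i] n)
  (rho sq : 'M[R[i]]_n) :
  is_subspace V -> is_full (alg V) ->
  posdef rho ->
  (* sq = rho^{-1/2}: the positive definite square root of rho^{-1} *)
  posdef sq -> sq *m sq = invmx rho ->
  (compatible rho (alg (Dinv sq V)) <-> is_full (alg (Dinv sq V))).
Proof.
move=> _ HV Hrho Hsq Hsq2; split.
  exact: compatible_full.
exact: full_compatible.
Qed.
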